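(* Let $x\in\beta\mathbb{N}$ with $x\in\overline{L_i}$ for some $i\ge1$. Then $x$ is irreducible in $\beta\mathbb{N}$ or $x$ is a product of irreducible elements of $\beta\mathbb{N}$.
   Context: $\mathbb{N}=\{1,2,3,\dots\}$; $\beta\mathbb{N}$ is the set of ultrafilters on $\mathbb{N}$ (Stone–Čech compactification of discrete $\mathbb{N}$, naturals identified with principal ultrafilters), with multiplication: $A\in xy$ iff $\{n\in\mathbb{N}:A/n\in y\}\in x$, where $A/n=\{m:mn\in A\}$. For $A\subseteq\mathbb{N}$, $\overline{A}=\{x\in\beta\mathbb{N}: A\in x\}$. $P$ is the set of primes, $L_0=\{1\}$, $L_n=\{a_1\cdots a_n: a_1,\dots,a_n\in P\}$. An element $p\in\beta\mathbb{N}$ is irreducible in $\beta\mathbb{N}$ if it cannot be written as $p=xy$ with $x,y\in\beta\mathbb{N}\setminus\{1\}$. *)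

(* Defs.v *)
From mathcomp Require Import all_boot.
Set Implicit Arguments. Unset Strict Implicit. Unset Printing Implicit Defensive.

(* Subsets of N = {1,2,...} are represented as predicates on nat; an
   element of beta N is an ultrafilter on nat that contains the set of
   positive naturals (so it is concentrated on N = {1,2,...}). *)
Definition uf := (nat -> Prop) -> Prop.

Definition is_ultra (U : uf) : Prop :=
  [/\ U (fun n => 0 < n),
      ~ U (fun _ => False),
      (forall A B : nat -> Prop, U A -> (forall n, A n -> B n) -> U B),
      (forall A B : nat -> Prop, U A -> U B -> U (fun n => A n /\ B n))
    & (forall A : nat -> Prop, U A \/ U (fun n => ~ A n))].

(* principal ultrafilter of k (naturals identified with principal ultrafilters) *)
Definition principal (k : nat) : uf := fun A => A k.
Definition uf1 : uf := principal 1.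

Definition sdiv (A : nat -> Prop) (n : nat) : nat -> Prop := fun m => A (m * n).

Definition ufmul (x y : uf) : uf := fun A => x (fun n => y (sdiv A n)).

Definition in_closure (A : nat -> Prop) (x : uf) : Prop := x A.

Definition L (n : nat) : nat -> Prop :=
  fun m => exists s : seq nat, [/\ size s = n, all prime s & m = \prod_(a <- s) a].

Definition irreducible_uf (p : uf) : Prop :=
  forall x y : uf, is_ultra x -> is_ultra y -> x <> uf1 -> y <> uf1 -> p <> ufmul x y.

(* finite product p * q1 * ... * qk (multiplication on beta N is associative) *)
Definition ufprod (p : uf) (qs : seq uf) : uf := foldl ufmul p qs.

Fixpoint all_prop (P : uf -> Prop) (s : seq uf) : Prop :=
  if s is q :: s' then P q /\ all_prop P s' else True.

(* Main.v *)
Require Import Defs.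
From mathcomp Require Import all_boot.
From mathcomp Require Import zify.
From Stdlib Require Import Classical FunctionalExtensionality PropExtensionality.

Definition Om (m : nat) := \sum_(q < m.+1) logn q m.

Lemma logn_big q m : 0 < m -> m < q -> logn q m = 0.
Proof.
move=> Hm Hq; apply/eqP; rewrite -leqn0 leqNgt logn_gt0 mem_primes.
apply/negP => /and3P [_ _ /dvdn_leq H]; have := H Hm; lia.
Qed.

Lemma Om_widen m N : 0 < m -> m < N -> \sum_(q < N) logn q m = Om m.
Proof.
move=> Hm HN; rewrite /Om (big_ord_widen N (fun q => logn q m) HN) [RHS]big_mkcond.
apply: eq_bigr => q _; case: ifP => // /negbT; rewrite -leqNgt => Hq.
by rewrite logn_big.
Qed.

Lemma Om_mul m n : 0 < m -> 0 < n -> Om (m * n) = Om m + Om n.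
Proof.
move=> Hm Hn; rewrite {1}/Om.
rewrite (eq_bigr (fun q : 'I_(m*n).+1 => logn q m + logn q n)); last first.
  by move=> q _; rewrite lognM.
rewrite big_split /= !Om_widen //; nia.
Qed.

Lemma Om1 : Om 1 = 0.
Proof. by rewrite /Om big1 // => q _; rewrite logn1. Qed.

Lemma Omp p : prime p -> Om p = 1.
Proof.
move=> Hp; rewrite /Om big_ord_recr /= logn_prime // eqxx big1 //.
move=> q _; rewrite logn_prime //=; apply/eqP; have := ltn_ord q; lia.
Qed.

Lemma LP k m : L k m <-> 0 < m /\ Om m = k.
Proof.
split.
  case=> s [<- Hs ->]; elim: s Hs => [|a s IH] /=; first by rewrite big_nil Om1.
  move=> /andP [Ha Hs]; have [H1 H2] := IH Hs.
  have Ha0 : 0 < a by apply: prime_gt0.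
  rewrite big_cons Om_mul // Omp // H2; split=> //; by rewrite muln_gt0 Ha0.
elim/ltn_ind: m k => m IH k [Hm HO].
case: (ltngtP m 1) => Hm1; first lia.
  have Hp := pdiv_prime Hm1.
  have Hp1 := prime_gt1 Hp.
  have Em : m = pdiv m * (m %/ pdiv m) by rewrite mulnC divnK // pdiv_dvd.
  have Hq : 0 < m %/ pdiv m by rewrite divn_gt0 ?prime_gt0 // dvdn_leq // pdiv_dvd.
  have HOq : Om (m %/ pdiv m) = k.-1.
    have := Om_mul _ _ (prime_gt0 Hp) Hq; rewrite -Em (Omp _ Hp) => E; lia.
  have [s [Hs1 Hs2 Hs3]] := IH _ (ltn_Pdiv Hp1 Hm) _ (conj Hq HOq).
  exists (pdiv m :: s); split.
  - have := Om_mul _ _ (prime_gt0 Hp) Hq; rewrite -Em (Omp _ Hp) => E; rewrite /= Hs1; lia.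
  - by rewrite /= Hp.
  - by rewrite big_cons -Hs3.
subst m; rewrite Om1 in HO; subst k; by exists [::]; rewrite big_nil.
Qed.

Lemma mono (y : uf) (A B : nat -> Prop) : is_ultra y -> y A -> (forall n, A n -> B n) -> y B.
Proof. by case=> _ _ H _ _; apply: H. Qed.

Lemma inter (y : uf) (A B : nat -> Prop) : is_ultra y -> y A -> y B -> y (fun n => A n /\ B n).
Proof. by case=> _ _ _ H _; apply: H. Qed.

Arguments mono {y A B}.
Arguments inter {y A B}.
Lemma nonempty (y : uf) A : is_ultra y -> y A -> exists n, A n.
Proof.
move=> uy yA; apply: NNPP => H; case: uy => _ H0 Hm _ _; apply: H0.
apply: (Hm _ _ yA) => n An; apply: H; by exists n.
Qed.

Arguments nonempty {y A}.
Lemma U_fin (y : uf) (f : nat -> nat) {P : nat -> Prop} {i} : is_ultra y ->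
  y (fun n => P n /\ f n <= i) -> exists2 j, j <= i & y (fun n => P n /\ f n = j).
Proof.
move=> uy; elim: i => [|i IH] H.
  exists 0 => //; apply: (mono uy H) => n [? ?]; split => //; lia.
have uy' := uy; case: uy' => _ _ _ _ Hc.
case: (Hc (fun n => f n = i.+1)) => Hi.
  exists i.+1 => //; apply: (mono uy (inter uy H Hi)) => n [[? ?] ?]; by [].
have [j Hj Hy] : exists2 j, j <= i & y (fun n => P n /\ f n = j).
  apply: IH; apply: (mono uy (inter uy H Hi)) => n [[? ?] ?]; split => //; lia.
exists j => //; lia.
Qed.

Lemma L0_one {n} : L 0 n -> n = 1.
Proof. case=> s [Hs _ ->]; case: s Hs => // _; by rewrite big_nil. Qed.

Lemma L0_uf1 (y : uf) : is_ultra y -> y (L 0) -> y = uf1.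
Proof.
move=> uy H; apply: functional_extensionality => A; apply: propositional_extensionality.
rewrite /uf1 /principal; split.
  move=> yA; have [n [Ln An]] := nonempty uy (inter uy H yA).
  by rewrite -(L0_one Ln).
move=> A1; apply: (mono uy H) => n /L0_one ->; exact: A1.
Qed.

Lemma split_len (y z : uf) i : is_ultra y -> is_ultra z -> ufmul y z (L i) ->
  exists j k, [/\ j + k = i, y (L j) & z (L k)].
Proof.
move=> uy uz H; rewrite /ufmul in H.
have H1 : y (fun n => 0 < n /\ Om n <= i).
  apply: (mono uy H) => n Hz.
  have [m /LP [Hmn Om_]] := nonempty uz Hz.
  move: Hmn; rewrite muln_gt0 => /andP [Hm Hn].
  move: Om_; rewrite Om_mul // => E; split => //; lia.
have [j Hj Hy] := U_fin _ Om uy H1.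
have HyL : y (L j) by apply: (mono uy Hy) => n /LP.
have [n [Hz [Hn On]]] := nonempty uy (inter uy H Hy).
exists j, (i - j); split => //; first lia.
apply: (mono uz Hz) => m /LP [Hmn Om_].
move: Hmn; rewrite muln_gt0 => /andP [Hm _].
move: Om_; rewrite Om_mul // On => E; apply/LP; split => //; lia.
Qed.

Lemma ufmulA (x y z : uf) : ufmul x (ufmul y z) = ufmul (ufmul x y) z.
Proof.
rewrite /ufmul; apply: functional_extensionality => A; congr x.
apply: functional_extensionality => n; congr y.
apply: functional_extensionality => m; congr z.
apply: functional_extensionality => k; by rewrite /sdiv mulnA.
Qed.

Lemma ufprod_mul a b l : ufmul a (ufprod b l) = ufprod (ufmul a b) l.
Proof.
elim: l b => [|c l IH] b //=; by rewrite IH ufmulA.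
Qed.

Lemma ufprod_mul2 p qs p' qs' :
  ufmul (ufprod p qs) (ufprod p' qs') = ufprod p (qs ++ p' :: qs').
Proof. by rewrite ufprod_mul /ufprod foldl_cat. Qed.

Lemma all_prop_cat P s t : all_prop P s -> all_prop P t -> all_prop P (s ++ t).
Proof. elim: s => //= a s IH [? ?] ?; split => //; exact: IH. Qed.

Definition IRR := fun q => is_ultra q /\ irreducible_uf q.

Lemma main i : forall x, is_ultra x -> 1 <= i -> x (L i) ->
  exists p qs, [/\ IRR p, all_prop IRR qs & x = ufprod p qs].
Proof.
elim/ltn_ind: i => i IH x ux Hi Hx.
case: (classic (irreducible_uf x)) => Hirr.
  by exists x, [::]; split.
have [y [z [uy uz y1 z1 E]]] : exists y z, [/\ is_ultra y, is_ultra z, y <> uf1, z <> uf1 & x = ufmul y z].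
  apply: NNPP => C; apply: Hirr => y z uy uz y1 z1 E; apply: C; by exists y, z.
rewrite E in Hx; have [j [k [Ejk Hy Hz]]] := split_len _ _ _ uy uz Hx.
have Hj : 1 <= j by case: j Hy {Ejk} => // Hy; case: y1; apply: L0_uf1.
have Hk : 1 <= k by case: k Hz {Ejk} => // Hz; case: z1; apply: L0_uf1.
have [p [qs [Hp Hqs Ey]]] := IH j ltac:(lia) y uy Hj Hy.
have [p' [qs' [Hp' Hqs' Ez]]] := IH k ltac:(lia) z uz Hk Hz.
exists p, (qs ++ p' :: qs'); split => //.
  apply: all_prop_cat => //=.
by rewrite E Ey Ez ufprod_mul2.
Qed.

Theorem theorem2p10 (x : uf) (i : nat) :
  is_ultra x -> 1 <= i -> in_closure (L i) x ->
  irreducible_uf x \/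
  (exists (p : uf) (qs : seq uf),
      [/\ 1 <= size qs,
          is_ultra p /\ irreducible_uf p,
          all_prop (fun q => is_ultra q /\ irreducible_uf q) qs
        & x = ufprod p qs]).
Proof.
move=> ux Hi Hx; have [p [qs [[up ip] Hqs E]]] := main i x ux Hi Hx.
case: qs Hqs E => [|q qs] Hqs E; first by left; rewrite E.
by right; exists p, (q :: qs); split.
Qed.
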